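(* Let $\widetilde L$ be a standardized Laplacian matrix of order $n$, and let $P=\widetilde L+J$ and $\widetilde L_c=K-\widetilde L$. Then for every complex $\lambda\notin\{0,1\}$ the following are equivalent: (a) $\lambda\in\operatorname{sp}\widetilde L$; (b) $\lambda\in\operatorname{sp}P$; (c) $1-\lambda\in\operatorname{sp}\widetilde L_c$; and these eigenvalues have the same geometric multiplicity. Furthermore, for $\lambda\notin\{0,1\}$, a vector $v$ is an eigenvector of $\widetilde L$ corresponding to $\lambda$ if and only if $x=\big(I-\frac{1}{1-\lambda}J\big)v$ is an eigenvector of $P$ corresponding to $\lambda$ and an eigenvector of $\widetilde L_c$ corresponding to $1-\lambda$.
   Context: A standardized Laplacian matrix of order $n$ is a real $n\times n$ matrix whose row sums are all $0$ and whose off-diagonal entries are nonpositive with absolute value at most $1/n$. $J$ is the $n\times n$ matrix with all entries $1/n$, and $K=I-J$. $\operatorname{sp}A$ denotes the spectrum of $A$. *)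

(* Defs.v *)
(* Complex numbers are modelled by an arbitrary
   numClosedFieldType C (e.g. algC); "real" entries are those in Num.real. *)
From HB Require Import structures.
From mathcomp Require Import all_boot all_order all_algebra.
Set Implicit Arguments. Unset Strict Implicit. Unset Printing Implicit Defensive.
Import Order.TTheory GRing.Theory Num.Theory.
Local Open Scope ring_scope.

Definition Jmx (C : numClosedFieldType) (n : nat) : 'M[C]_n := const_mx (n%:R^-1).

Definition Kmx (C : numClosedFieldType) (n : nat) : 'M[C]_n := 1%:M - Jmx C n.

Definition std_laplacian (C : numClosedFieldType) (n : nat) (L : 'M[C]_n) : Prop :=
  (forall i j, L i j \is Num.real) /\
  (forall i, \sum_(j < n) L i j = 0) /\
  (forall i j, i != j -> L i j <= 0 /\ `|L i j| <= n%:R^-1).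

Definition col_eigenvector (C : numClosedFieldType) (n : nat) (A : 'M[C]_n)
  (lam : C) (v : 'cV[C]_n) : Prop :=
  v != 0 /\ A *m v = lam *: v.

Definition geom_mult (C : numClosedFieldType) (n : nat) (A : 'M[C]_n) (lam : C) : nat :=
  \rank (eigenspace A lam).

(* Main.v *)
Require Import Defs.
From HB Require Import structures.
From mathcomp Require Import all_boot all_order all_algebra.
Import Order.TTheory GRing.Theory Num.Theory.
Local Open Scope ring_scope.

Section S.
Variables (C : numClosedFieldType) (n : nat).
Local Notation J := (Jmx C n).

Lemma JJ : J *m J = J.
Proof.
apply/matrixP => i j; rewrite !mxE.
have n0 : (n%:R : C) != 0 by rewrite pnatr_eq0 -lt0n (leq_ltn_trans _ (ltn_ord i)).
under eq_bigr do rewrite !mxE.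
by rewrite sumr_const card_ord -mulrnAr -(mulr_natr (n%:R^-1 : C)) mulVf // mulr1. Qed.

Lemma LJ (L : 'M[C]_n) : (forall i, \sum_(j < n) L i j = 0) -> L *m J = 0.
Proof.
move=> hs; apply/matrixP => i j; rewrite !mxE.
under eq_bigr do rewrite !mxE.
by rewrite -mulr_suml hs mul0r.
Qed.

Lemma MM (a b : C) : (1%:M - b *: J) *m (1%:M - a *: J) = 1%:M - (a + b - b * a) *: J.
Proof.
rewrite mulmxBl !mulmxBr !mul1mx mulmx1 -!scalemxAl -!scalemxAr JJ scalerA.
rewrite !scalerDl scaleNr.
by rewrite !opprD !opprK !addrA [_ + (b * a) *: _]addrC !addrA. Qed.


Lemma eigP (A : 'M[C]_n) (c : C) (w : 'cV[C]_n) :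
  ((A - c%:M) *m w = 0) <-> (A *m w = c *: w).
Proof.
rewrite mulmxBl mul_scalar_mx; split=> [/eqP|->]; last by rewrite subrr.
by rewrite subr_eq0 => /eqP.
Qed.

End S.

Theorem theorem4 (C : numClosedFieldType) (n : nat) (L : 'M[C]_n)
  (hL : std_laplacian L) (lam : C) (h0 : lam != 0) (h1 : lam != 1) :
  let P := L + Jmx C n in
  let Lc := Kmx C n - L in
  [/\ (eigenvalue L lam <-> eigenvalue P lam),
      (eigenvalue L lam <-> eigenvalue Lc (1 - lam)),
      geom_mult L lam = geom_mult P lam,
      geom_mult L lam = geom_mult Lc (1 - lam) &
      forall v : 'cV[C]_n,
        col_eigenvector L lam v <->
        (col_eigenvector P lam ((1%:M - (1 - lam)^-1 *: Jmx C n) *m v) /\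
         col_eigenvector Lc (1 - lam) ((1%:M - (1 - lam)^-1 *: Jmx C n) *m v))].
Proof.
move=> P Lc.
case: hL => _ [hs _].
have hLJ := @LJ C n L hs.
set a := (1 - lam)^-1.
set b := lam^-1.
set M := 1%:M - a *: Jmx C n.
have h1' : 1 - lam != 0 by rewrite subr_eq0 eq_sym.
have hab : a + b - b * a = 0.
  have e1 : a * (1 - lam) = 1 by rewrite mulVf.
  have e2 : b * lam = 1 by rewrite mulVf.
  apply/eqP; rewrite subr_eq0; apply/eqP.
  have -> : b * a = b * a * ((1 - lam) + lam) by rewrite subrK mulr1.
  rewrite mulrDr -(mulrA b) e1 mulr1 (mulrC b) -mulrA e2 mulr1.
  by rewrite addrC.
have MM1 : (1%:M - b *: Jmx C n) *m M = 1%:M.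
  by rewrite /M MM (_ : a + b - b * a = 0) // scale0r subr0.
have MM2 : M *m (1%:M - b *: Jmx C n) = 1%:M.
  by rewrite /M MM (_ : b + a - a * b = 0) ?scale0r ?subr0 // (addrC b) (mulrC a).
have Mu : M \in unitmx by case: (mulmx1_unit MM2).
have key1 : (P - lam%:M) *m M = L - lam%:M.
  rewrite /P /M mulmxBr mulmx1 -scalemxAr !mulmxDl hLJ add0r JJ mulNmx mul_scalar_mx.
  have e : a *: (Jmx C n - lam *: Jmx C n) = Jmx C n.
    by rewrite -{1}(scale1r (Jmx C n)) -scalerBl scalerA mulVf // scale1r.
  by rewrite e addrAC addrK.
have hLc : Lc = 1%:M - P by rewrite /Lc /P /Kmx opprD addrA addrAC.
have key2 : Lc - (1 - lam)%:M = - (P - lam%:M).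
  by rewrite hLc raddfB /= !opprB addrC addrA subrK.
have r1 : \rank (L - lam%:M) = \rank (P - lam%:M).
  by rewrite -key1 mxrankMfree // row_free_unit.
have r2 : \rank (Lc - (1 - lam)%:M) = \rank (P - lam%:M).
  by rewrite key2 mxrank_opp.
have g1 : geom_mult L lam = geom_mult P lam by rewrite /geom_mult /eigenspace !mxrank_ker r1.
have g2 : geom_mult L lam = geom_mult Lc (1 - lam) by rewrite /geom_mult /eigenspace !mxrank_ker r1 r2.
have hev : forall (A : 'M[C]_n) c, eigenvalue A c = (geom_mult A c != 0%N).
  by move=> A c; rewrite /eigenvalue /geom_mult mxrank_eq0.
split.
- by rewrite !hev g1.
- by rewrite !hev g2.
- exact: g1.
- exact: g2.
move=> v; rewrite /col_eigenvector -/a -/M.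
split.
- case=> vn0 Lv.
  have xn0 : M *m v != 0.
    apply: contra vn0 => /eqP x0.
    by rewrite -[v]mul1mx -MM1 -mulmxA x0 mulmx0.
  have Px : P *m (M *m v) = lam *: (M *m v).
    by apply/eigP; rewrite mulmxA key1; apply/eigP.
  split; split=> //.
  by rewrite hLc mulmxBl mul1mx Px -{1}[M *m v]scale1r -scalerBl.
- case=> [[xn0 Px] _]; split.
    by apply: contra xn0 => /eqP ->; rewrite mulmx0.
  by apply/eigP; rewrite -key1 -mulmxA; apply/eigP.
Qed.
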